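(* Let $A$ be a linear Nakayama algebra with simple modules $S_0,\dots,S_{n-1}$, Kupisch series $[c_0,\dots,c_{n-1}]$, and let $d_j=\dim_K D(Ae_j)$. For $0\le i\le n-1$, the indecomposable projective module $e_iA$ has injective dimension equal to one if and only if $c_i<d_{i+c_i-1}$ and $d_{i+c_i-1}-c_i=d_{i-1}$ (with the convention $d_{-1}:=0$).
   Context: $K$ is a field; a linear Nakayama algebra with $n$ simple modules is a connected algebra $A=KQ/I$ with $Q$ the quiver $0\to1\to\cdots\to n-1$ and $I$ admissible; modules are finite-dimensional right modules. $e_iA$ is uniserial with composition factors $S_i,\dots,S_{i+c_i-1}$ from top to socle, $c_i=\dim_K e_iA$. $D=\operatorname{Hom}_K(-,K)$ and $D(Ae_j)$ is the injective envelope of $S_j$. *)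

(* Defs.v *)
(* Finite-dimensional right modules over a linear Nakayama
   algebra A = KQ/I, Q = 0 -> 1 -> ... -> n-1, presented as representations
   of Q (vertices are natural numbers, dimension 0 outside [0,n)) satisfying
   the relations of I.  Right-module convention: row vectors, v |-> v *m M. *)
From HB Require Import structures.
From mathcomp Require Import all_boot all_order all_algebra.
Set Implicit Arguments. Unset Strict Implicit. Unset Printing Implicit Defensive.
Import GRing.Theory.
Local Open Scope ring_scope.

Record rep (K : fieldType) := Rep {
  dimv : nat -> nat ;
  mapv : forall k : nat, 'M[K]_(dimv k, dimv k.+1) }.

Fixpoint pathmap (K : fieldType) (V : rep K) (i l : nat)
  : 'M[K]_(dimv V i, dimv V (l + i)) :=
  match l return 'M[K]_(dimv V i, dimv V (l + i)) with
  | 0 => 1%:M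
  | l'.+1 => pathmap V i l' *m mapv V (l' + i)
  end.

(* Kupisch series of a connected linear Nakayama algebra with n simples:
   c_{n-1} = 1, c_i >= 2 for i < n-1, c_{i+1} >= c_i - 1.  The admissible
   ideal I is generated by the paths i -> i + c_i (c_i = dim e_i A). *)
Definition kupisch (n : nat) (c : nat -> nat) : Prop :=
  (0 < n)%N /\ c n.-1 = 1%N /\ (forall i, (i < n.-1)%N -> (2 <= c i)%N) /\
  (forall i, (i < n.-1)%N -> (c i <= (c i.+1).+1)%N).

Definition is_module (K : fieldType) (n : nat) (c : nat -> nat) (V : rep K) :=
  (forall k, (n <= k)%N -> dimv V k = 0%N) /\
  (forall i, (i < n)%N -> pathmap V i (c i) = 0).

Definition is_hom (K : fieldType) (V W : rep K)
  (f : forall k, 'M[K]_(dimv V k, dimv W k)) : Prop :=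
  forall k, mapv V k *m f k.+1 = f k *m mapv W k.

Definition injective_mod (K : fieldType) (n : nat) (c : nat -> nat) (E : rep K) :=
  is_module n c E /\
  forall (X Y : rep K) (u : forall k, 'M[K]_(dimv X k, dimv Y k))
         (g : forall k, 'M[K]_(dimv X k, dimv E k)),
    is_module n c X -> is_module n c Y -> is_hom u -> is_hom g ->
    (forall k, row_free (u k)) ->
    exists h : forall k, 'M[K]_(dimv Y k, dimv E k),
      is_hom h /\ forall k, u k *m h k = g k.

Definition inj_coresolution (K : fieldType) (n : nat) (c : nat -> nat)
  (V : rep K) (m : nat) : Prop :=
  exists (I : nat -> rep K)
         (e : forall k, 'M[K]_(dimv V k, dimv (I 0%N) k))
         (d : forall j k, 'M[K]_(dimv (I j) k, dimv (I j.+1) k)),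
    [/\ forall j, (j <= m)%N -> injective_mod n c (I j),
        forall j k, (m < j)%N -> dimv (I j) k = 0%N,
        is_hom e /\ (forall j, is_hom (d j)),
        forall k, row_free (e k) &
        (forall k, (e k == kermx (d 0%N k))%MS) /\
        (forall j k, (d j k == kermx (d j.+1 k))%MS)].

Definition inj_dim_eq (K : fieldType) (n : nat) (c : nat -> nat)
  (V : rep K) (m : nat) : Prop :=
  inj_coresolution n c V m /\
  forall m', (m' < m)%N -> ~ inj_coresolution n c V m'.

(* The indecomposable projective e_i A: composition factors S_i..S_{i+c_i-1}
   (one-dimensional at those vertices, identity maps between them). *)
Definition projP (K : fieldType) (n : nat) (c : nat -> nat) (i : nat) : rep K :=
  @Rep K (fun k => ((i <= k)%N && (k < i + c i)%N && (k < n)%N : nat))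
         (fun k => const_mx 1).

(* D(A e_j): e_k A e_j is nonzero iff k <= j < k + c_k (path k -> j nonzero). *)
Definition injI (K : fieldType) (n : nat) (c : nat -> nat) (j : nat) : rep K :=
  @Rep K (fun k => ((k <= j)%N && (j < k + c k)%N && (k < n)%N : nat))
         (fun k => const_mx 1).

Definition dimD (K : fieldType) (n : nat) (c : nat -> nat) (j : nat) : nat :=
  (\sum_(k < n) dimv (injI K n c j) k)%N.

Definition dimD_pred (K : fieldType) (n : nat) (c : nat -> nat) (i : nat) : nat :=
  if i is i'.+1 then dimD K n c i' else 0%N.

(* Main.v *)
Require Import Defs.
From mathcomp Require Import all_boot all_order all_algebra.
From mathcomp Require Import zify.
Require Import Defs.
Set Implicit Arguments. Unset Strict Implicit. Unset Printing Implicit Defensive.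
Import GRing.Theory.
Local Open Scope ring_scope.
Lemma mx0d (K : fieldType) m p (A : 'M[K]_(m, p)) : (m = 0 \/ p = 0)%N -> A = 0.
Proof. by case=> H; move: A; rewrite H => A; [rewrite flatmx0|rewrite thinmx0]. Qed.

Lemma mxeqd (K : fieldType) m p (A B : 'M[K]_(m, p)) : (m = 0 \/ p = 0)%N -> A = B.
Proof. by move=> H; rewrite (mx0d A H) (mx0d B H). Qed.

Lemma constM (K : fieldType) m p q :
  (const_mx 1 : 'M[K]_(m, p)) *m (const_mx 1 : 'M[K]_(p, q)) = const_mx (p%:R).
Proof.
apply/matrixP => i j; rewrite !mxE.
rewrite (eq_bigr (fun _ => 1)) ?sumr_const ?card_ord //.
by move=> k _; rewrite !mxE mulr1.
Qed.

Lemma constM1 (K : fieldType) m p q : p = 1%N ->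
  (const_mx 1 : 'M[K]_(m, p)) *m (const_mx 1 : 'M[K]_(p, q)) = const_mx 1.
Proof. by move=> H; rewrite constM H. Qed.

Lemma constM0 (K : fieldType) m p q : p = 0%N ->
  (const_mx 1 : 'M[K]_(m, p)) *m (const_mx 1 : 'M[K]_(p, q)) = 0.
Proof. by move=> H; rewrite constM H; apply/matrixP => i j; rewrite !mxE. Qed.

Lemma const_id (K : fieldType) p : p = 1%N -> (const_mx 1 : 'M[K]_p) = 1%:M.
Proof.
move=> H; move: H => -> ; apply/matrixP => i j; rewrite !mxE.
by rewrite !ord1.
Qed.

Lemma constK (K : fieldType) m p (A : 'M[K]_(m, p)) : p = 1%N ->
  A *m (const_mx 1 : 'M[K]_(p, 1)) *m (const_mx 1 : 'M[K]_(1, p)) = A.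
Proof. by move=> H; rewrite -mulmxA constM1 // const_id // mulmx1. Qed.

Lemma constL (K : fieldType) p q (B : 'M[K]_(p, q)) : p = 1%N ->
  (const_mx 1 : 'M[K]_(p, p)) *m B = B.
Proof. by move=> H; rewrite const_id // mul1mx. Qed.

Lemma const_swap (K : fieldType) p p' q r (B : 'M[K]_(q, r)) : p = 1%N -> p' = 1%N ->
  (const_mx 1 : 'M[K]_(p', q)) *m B = (const_mx 1 : 'M[K]_(p', q)) *m B.
Proof. by []. Qed.

Lemma const_transfer (K : fieldType) p p' q r (B : 'M[K]_(q, r)) : p = 1%N -> p' = 1%N ->
  (const_mx 1 : 'M[K]_(p', q)) *m B = 0 -> (const_mx 1 : 'M[K]_(p, q)) *m B = 0.
Proof.
move=> -> ->; move=> H; apply/matrixP => i j; move/matrixP: H => /(_ i j).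
by rewrite !mxE.
Qed.

Lemma rank_const (K : fieldType) p q : (p <= 1)%N -> (q <= 1)%N ->
  \rank (const_mx 1 : 'M[K]_(p, q)) = (p * q)%N.
Proof.
case: p => [|[|//]] _ Hq; first by rewrite mul0n; apply/eqP; rewrite -leqn0 rank_leq_row.
case: q Hq => [|[|//]] _; first by rewrite muln0; apply/eqP; rewrite -leqn0 rank_leq_col.
by rewrite const_id // mxrank1.
Qed.

Lemma exact_ker (K : fieldType) p m q (B : 'M[K]_(p, m)) (A : 'M[K]_(m, q)) :
  B *m A = 0 -> (\rank B + \rank A)%N = m -> (B == kermx A)%MS.
Proof.
move=> BA Hr.
have sub : (B <= kermx A)%MS by apply/sub_kermxP.
have := mxrank_leqif_eq sub; case=> _ <-.
by rewrite mxrank_ker; apply/eqP; lia.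
Qed.

Lemma row_free_const (K : fieldType) p q : (p = 0 \/ (p = 1 /\ q = 1))%N ->
  row_free (const_mx 1 : 'M[K]_(p, q)).
Proof.
case=> [->|[-> ->]]; first by rewrite /row_free -leqn0 rank_leq_row.
by rewrite const_id // row_free_unit unitmx1.
Qed.

Lemma row_free_ne0 (K : fieldType) p q (A : 'M[K]_(p, q)) : p = 1%N -> row_free A -> A != 0.
Proof. by move=> H; apply: contraL => /eqP ->; rewrite /row_free mxrank0 H. Qed.
Definition IR (K : fieldType) (P : nat -> bool) : rep K :=
  @Rep K (fun k => (P k : nat)) (fun k => const_mx 1).

Lemma path_add0 (K : fieldType) (V : rep K) i l m :
  pathmap V i l = 0 -> pathmap V i (m + l) = 0.
Proof. by move=> H; elim: m => [|m IH] //=; rewrite IH mul0mx. Qed.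

Lemma path_vanish (K : fieldType) n c (V : rep K) k l :
  is_module n c V -> (k < n)%N -> (c k <= l)%N -> pathmap V k l = 0.
Proof.
move=> [_ HV] kn cl; rewrite -(subnK cl); apply: path_add0; exact: HV.
Qed.

Lemma path_hom (K : fieldType) (V W : rep K) f : @is_hom K V W f ->
  forall k l, pathmap V k l *m f (l + k)%N = f k *m pathmap W k l.
Proof.
move=> Hf k; elim=> [|l IH] /=; first by rewrite mul1mx mulmx1.
by rewrite -mulmxA Hf mulmxA IH mulmxA.
Qed.

Lemma pathmapS_F (K : fieldType) (V : rep K) r t k
  (F : forall m, 'M[K]_(dimv V m, r)) :
  mapv V k *m pathmap V k.+1 t *m F (t + k.+1)%N = pathmap V k t.+1 *m F (t.+1 + k)%N.
Proof.
elim: t F => [|t IH] F /=; first by rewrite mulmx1 mul1mx.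
have := IH (fun m => mapv V m *m F m.+1) => /= IH'.
by rewrite !mulmxA in IH' *; rewrite IH'.
Qed.

Lemma path_IR (K : fieldType) (P : nat -> bool) k l :
  (forall i, (k <= i <= l + k)%N -> P i) -> pathmap (IR K P) k l = const_mx 1.
Proof.
elim: l => [|l IH] H /=.
  by rewrite const_id //= H // leqnn.
rewrite IH; last by move=> i /andP[h1 h2]; apply: H; rewrite h1 /=; lia.
by rewrite constM1 //= H //; apply/andP; split; lia.
Qed.

Lemma IR_module (K : fieldType) n c (P : nat -> bool) s t : (t < n)%N ->
  (forall k, P k = (s <= k <= t)%N) ->
  (forall k, (s <= k <= t)%N -> (t < k + c k)%N) -> is_module n c (IR K P).
Proof.
move=> tn HP Hc; split.
  move=> k kn /=; rewrite HP.
  by rewrite (_ : (k <= t)%N = false) ?andbF //; apply/negbTE; rewrite -ltnNge; lia.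
move=> k kn; apply: mx0d.
case Pk: (P k); [right | left]; last by rewrite /= Pk.
have := Hc k; rewrite -HP Pk => /(_ isT) h.
rewrite /= HP (_ : (c k + k <= t)%N = false) ?andbF //.
by apply/negbTE; rewrite -ltnNge; lia.
Qed.

Lemma IR_inj (K : fieldType) n c (P : nat -> bool) s t : (t < n)%N ->
  (forall k, P k = (s <= k <= t)%N) ->
  (forall k, (s <= k <= t)%N -> (t < k + c k)%N) ->
  ((0 < s)%N -> (s.-1 + c s.-1 <= t)%N) ->
  injective_mod n c (IR K P).
Proof.
move=> tn HP Hc Hs; split; first exact: IR_module Hc.
move=> X Y u g mX mY hu hg rf.
pose z m : 'M[K]_(dimv Y m, 1) := pinvmx (u m) *m (g m *m const_mx 1).
have uz m : u m *m z m = g m *m const_mx 1 by rewrite /z mulmxA mulmxVp // mul1mx.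
clearbody z.
pose h k : 'M[K]_(dimv Y k, dimv (IR K P) k) :=
  pathmap Y k (t - k) *m z (t - k + k)%N *m const_mx 1.
exists h; split.
- move=> k.
  case: (boolP (P k.+1)) => Pk1; last by apply: mxeqd; right; rewrite /= (negbTE Pk1).
  have kt : (k < t)%N by move: Pk1; rewrite HP; lia.
  case: (boolP (P k)) => Pk.
  + rewrite /h !mulmxA pathmapS_F -[RHS]mulmxA [mapv (IR K P) k]/= constM1; last by rewrite /= Pk.
    have e : (t - k.+1).+1 = (t - k)%N by lia.
    by rewrite e.
  + rewrite /h !mulmxA pathmapS_F -[RHS]mulmxA [mapv (IR K P) k]/= constM0; last by rewrite /= (negbTE Pk).
    rewrite mulmx0 (@path_vanish K n c Y k) ?mul0mx //; first lia.
    have sk : s = k.+1 by move: Pk Pk1; rewrite !HP; lia.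
    have := Hs; rewrite sk /= => /(_ isT); lia.
- move=> k.
  case: (boolP (P k)) => Pk; last by apply: mxeqd; right; rewrite /= (negbTE Pk).
  have skt : (s <= k <= t)%N by rewrite -HP.
  rewrite /h !mulmxA -path_hom // -(mulmxA (pathmap X k _)) uz mulmxA path_hom //.
  rewrite path_IR; last by move=> i hi; rewrite HP; lia.
  rewrite -(mulmxA (g k)) constM1 /=; last by rewrite HP; apply/eqP; rewrite eqb1; lia.
  by rewrite constK //= Pk.
Qed.
Lemma kup_c1 n c k : kupisch n c -> (k < n)%N -> (1 <= c k)%N.
Proof.
move=> [n0 [cn [c2 _]]] kn.
case: (ltnP k n.-1) => h; first by have := c2 k h; lia.
have -> : k = n.-1 by lia.
by rewrite cn.
Qed.

Lemma kup_mono n c k1 k2 : kupisch n c -> (k1 <= k2)%N -> (k2 < n)%N ->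
  (k1 + c k1 <= k2 + c k2)%N.
Proof.
move=> kup; elim: k2 => [|k2 IH] h1 h2; first by have -> : k1 = 0%N by lia.
case: (ltnP k1 k2.+1) => h3; last by have -> : k1 = k2.+1 by lia.
have := IH ltac:(lia) ltac:(lia).
case: kup => [_ [_ [_ c3]]]; have := c3 k2 ltac:(lia); lia.
Qed.

Lemma kup_bound n c k : kupisch n c -> (k < n)%N -> (k + c k <= n)%N.
Proof.
move=> kup kn; have kup' := kup; case: kup' => [n0 [cn _]].
have := kup_mono kup (k1 := k) (k2 := n.-1) ltac:(lia) ltac:(lia).
rewrite cn; lia.
Qed.

Lemma kup_start n c j : kupisch n c -> (j < n)%N ->
  exists a, (a <= j)%N /\ forall k, (k <= j)%N -> (j < k + c k)%N = (a <= k)%N.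
Proof.
move=> kup jn.
have ex : exists k, (j < k + c k)%N by exists j; have := kup_c1 kup jn; lia.
case: (ex_minnP ex) => a Pa amin; exists a; split.
  by apply: amin; have := kup_c1 kup jn; lia.
move=> k kj; apply/idP/idP => h; first exact: amin.
have := kup_mono kup h ltac:(lia); lia.
Qed.

Lemma sum_int a b n : (\sum_(k < n) ((a <= k) && (k <= b) : nat))%N = (minn n b.+1 - a)%N.
Proof.
elim: n => [|n IH]; first by rewrite big_ord0; lia.
rewrite big_ord_recr /= IH.
by case: (leqP a n) => h1; case: (leqP n b) => h2 /=; lia.
Qed.

Lemma injI_pred n c j a : (j < n)%N ->
  (forall k, (k <= j)%N -> (j < k + c k)%N = (a <= k)%N) ->
  forall k, ((k <= j) && (j < k + c k) && (k < n))%N = (a <= k <= j)%N.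
Proof.
move=> jn Ha k; case: (leqP k j) => kj /=; last by rewrite andbF.
by rewrite Ha // (_ : (k < n)%N = true) ?andbT //; lia.
Qed.

Lemma dimD_eq (K : fieldType) n c j a : (j < n)%N ->
  (forall k, (k <= j)%N -> (j < k + c k)%N = (a <= k)%N) ->
  dimD K n c j = (j.+1 - a)%N.
Proof.
move=> jn Ha; rewrite /dimD.
rewrite (eq_bigr (fun k : 'I_n => (((a <= k) && (k <= j))%N : nat))); last first.
  by move=> k _ /=; rewrite (injI_pred jn Ha).
by rewrite sum_int; lia.
Qed.

Lemma hom_const (K : fieldType) (A B : nat -> bool) :
  (forall k, A k -> B k.+1 -> A k.+1 = B k) ->
  @is_hom K (IR K A) (IR K B) (fun k => const_mx 1).
Proof.
move=> H k /=; rewrite !constM.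
case Ak: (A k); last by apply: mxeqd; left.
case Bk: (B k.+1); last by apply: mxeqd; right.
by rewrite (H k Ak Bk).
Qed.

Lemma constL0 (K : fieldType) p q r (B : 'M[K]_(q, r)) : p = 1%N -> q = 1%N ->
  (const_mx 1 : 'M[K]_(p, q)) *m B = 0 -> B = 0.
Proof. by move=> -> Hq; move: B; rewrite Hq => B; rewrite const_id // mul1mx. Qed.

Lemma sub_flat0 (K : fieldType) p m q (D : 'M[K]_(m, q)) (B : 'M[K]_(p, q)) :
  p = 0%N -> (D <= B)%MS -> D = 0.
Proof.
move=> H /mxrankS h; apply/eqP; rewrite -mxrank_eq0 -leqn0.
by apply: (leq_trans h); rewrite -H rank_leq_row.
Qed.

Lemma kermx_full (K : fieldType) m q (A : 'M[K]_(m, q)) : q = 0%N -> row_full (kermx A).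
Proof.
move=> H; rewrite /row_full mxrank_ker.
have : (\rank A <= q)%N := rank_leq_col A.
move=> h; apply/eqP; lia.
Qed.
Lemma orN (b : bool) : b \/ ~~ b. Proof. by case: b; [left|right]. Qed.

Definition Zr (K : fieldType) : rep K := @Rep K (fun _ => 0%N) (fun _ => 0).

Lemma row_free_IR (K : fieldType) (A B : nat -> bool) :
  (forall k, A k -> B k) -> forall k, row_free (const_mx 1 : 'M[K]_(A k : nat, B k : nat)).
Proof.
move=> H k; apply: row_free_const.
case Ak: (A k); [right; split=> //; by rewrite H | by left].
Qed.

Theorem mainTheorem6_aux (K : fieldType) (n : nat) (c : nat -> nat) :
  kupisch n c ->
  forall i : nat, (i < n)%N ->
  (inj_dim_eq n c (projP K n c i) 1 <->
   ((c i < dimD K n c (i + c i - 1))%N /\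
    (dimD K n c (i + c i - 1) - c i)%N = dimD_pred K n c i)).
Proof.
move=> kup i iN.
have c1 := kup_c1 kup iN.
have bnd := kup_bound kup iN.
set j := (i + c i - 1)%N.
have hj : j.+1 = (i + c i)%N by rewrite /j; lia.
have jn : (j < n)%N by lia.
have ij : (i <= j)%N by lia.
have [a [aj Ha]] := kup_start kup jn.
have ai : (a <= i)%N by rewrite -Ha //; lia.
have dj : dimD K n c j = (j.+1 - a)%N := dimD_eq K jn Ha.
rewrite dj.
have PE := injI_pred jn Ha.
have PP : forall k, ((i <= k) && (k < i + c i) && (k < n))%N = (i <= k <= j)%N.
  by move=> k; lia.
have modP : is_module n c (projP K n c i).
  by apply: (@IR_module K n c _ i j) => // k hk; rewrite Ha; lia.
have modE : is_module n c (injI K n c j).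
  by apply: (@IR_module K n c _ a j) => // k hk; rewrite Ha; lia.
have homPE : @is_hom K (projP K n c i) (injI K n c j) (fun k => const_mx 1).
  by apply: hom_const => k /=; rewrite !PP !PE; lia.
have rfPE : forall k, row_free (const_mx 1 : 'M[K]_(dimv (projP K n c i) k, dimv (injI K n c j) k)).
  by apply: row_free_IR => k /=; rewrite PP PE; lia.
split; last first.
- move=> [h1 h2].
  have a_lt_i : (a < i)%N by lia.
  have [i' ei] : exists i', i = i'.+1 by exists i.-1; lia.
  subst i.
  have i'n : (i' < n)%N by lia.
  have [a2 [a2i Ha2]] := kup_start kup i'n.
  have d2 : dimD K n c i' = (i'.+1 - a2)%N := dimD_eq K i'n Ha2.
  move: h2; rewrite /= d2 => h2.
  have ea : a2 = a by lia.
  subst a2.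
  have PE2 := injI_pred i'n Ha2.
  have modE2 : is_module n c (injI K n c i').
    by apply: (@IR_module K n c _ a i') => // k hk; rewrite Ha2; lia.
  split.
  + pose I m := match m with 0 => injI K n c j | 1 => injI K n c i' | _ => Zr K end.
    pose d m k := match m as m0 return 'M[K]_(dimv (I m0) k, dimv (I m0.+1) k) with
                  | 0 => const_mx 1 | _ => 0 end.
    exists I, (fun k => const_mx 1), d; split.
    * move=> [|[|m]] // _.
        apply: (@IR_inj K n c _ a j) => //; first by move=> k hk; rewrite Ha; lia.
        by move=> a0; rewrite leqNgt Ha; lia.
      apply: (@IR_inj K n c _ a i') => //; first by move=> k hk; rewrite Ha2; lia.
      by move=> a0; rewrite leqNgt Ha2; lia.
    * by move=> [|[|m]].
    * split=> //.
      move=> [|m].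
        by apply: hom_const => k /=; rewrite !PE !PE2; lia.
      by move=> k; rewrite mulmx0 mul0mx.
    * exact: rfPE.
    * split.
        move=> k; apply: exact_ker.
          rewrite constM; apply: mx0d => /=; rewrite PP PE2; lia.
        rewrite !rank_const ?leq_b1 //=; rewrite PP PE PE2; lia.
      move=> [|[|m]] k; apply: exact_ker => //.
      - by rewrite mulmx0.
      - by rewrite rank_const ?leq_b1 //= mxrank0 PE PE2; lia.
      - by rewrite mulmx0.
      - by rewrite !mxrank0.
      - by rewrite mulmx0.
      - by rewrite !mxrank0.
  + move=> m' m'lt; have -> : m' = 0%N by lia.
    move=> [I [e [d [HI HZ [He Hd] Hrf [Hex0 Hex]]]]].
    have [mI0 injI0] := HI 0%N isT.
    have [h [hh uh]] := injI0 _ _ _ e modP modE homPE He rfPE.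
    have I0z : dimv (I 0%N) i' = 0%N.
      have r1 := eqmx_rank (Hex0 i'); rewrite mxrank_ker in r1.
      have r2 := rank_leq_col (d 0%N i').
      have r3 := HZ 1%N i' isT.
      have r4 := rank_leq_row (e i').
      have r5 : dimv (projP K n c i'.+1) i' = 0%N by rewrite /= PP; lia.
      lia.
    have := hh i'; rewrite (mx0d (h i') (or_intror I0z)) mul0mx => hh'.
    have hi0 : h i'.+1 = 0.
      apply: (constL0 _ _ hh'); rewrite /= PE; lia.
    have := uh i'.+1; rewrite hi0 mulmx0 => e0.
    have hP1 : dimv (projP K n c i'.+1) i'.+1 = 1%N by rewrite /= PP; lia.
    by move: (row_free_ne0 hP1 (Hrf i'.+1)); rewrite -e0 eqxx.
move=> [[I [e [d [HI HZ [He Hd] Hrf [Hex0 Hex]]]]] Hno].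
have a_lt_i : (a < i)%N.
  rewrite ltn_neqAle ai andbT; apply/eqP => ea; subst a.
  apply: (Hno 0%N isT).
  exists (fun m => if m is 0 then projP K n c i else Zr K).
  exists (fun k => (1%:M : 'M[K]_(dimv (projP K n c i) k))).
  exists (fun m k => 0); split.
  - move=> [|m] // _.
    apply: (@IR_inj K n c _ i j) => //; first by move=> k hk; rewrite Ha; lia.
    by move=> a0; rewrite leqNgt Ha; lia.
  - by move=> [|m].
  - by split=> [k /=|m k]; rewrite ?mulmx1 ?mul1mx ?mulmx0 ?mul0mx.
  - by move=> k; rewrite row_free_unit unitmx1.
  - split=> [k|m k]; apply: exact_ker; rewrite ?mulmx0 // ?mxrank1 !mxrank0 ?addn0 //.
have [i' ei] : exists i', i = i'.+1 by exists i.-1; lia.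
subst i.
have i'n : (i' < n)%N by lia.
have [a2 [a2i Ha2]] := kup_start kup i'n.
have d2 : dimD K n c i' = (i'.+1 - a2)%N := dimD_eq K i'n Ha2.
have a2a : (a2 <= a)%N.
  have := Ha a aj; rewrite leqnn => h.
  rewrite -Ha2; lia.
suff ea : a2 = a by rewrite /= d2; lia.
apply/eqP; rewrite eqn_leq a2a /= leqNgt; apply/negP => lt.
have [q eq] : exists q, a = q.+1 by exists a.-1; lia.
subst a.
have [mI0 injI0] := HI 0%N isT.
have [mI1 injI1] := HI 1%N isT.
have [psi [hpsi upsi]] := injI0 _ _ _ e modP modE homPE He rfPE.
pose PX k := (q.+1 <= k <= i')%N.
pose PY k := (q <= k <= i')%N.
have modX : is_module n c (IR K PX).
  by apply: (@IR_module K n c _ q.+1 i') => // k hk; rewrite Ha2; lia.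
have modY : is_module n c (IR K PY).
  by apply: (@IR_module K n c _ q i') => // k hk; rewrite Ha2; lia.
pose g' k : 'M[K]_(dimv (IR K PX) k, dimv (I 1%N) k) :=
  (const_mx 1 : 'M[K]_(dimv (IR K PX) k, dimv (injI K n c j) k)) *m psi k *m d 0%N k.
have hg' : is_hom g'.
  move=> k; rewrite /g' -!mulmxA -(Hd 0%N k) (mulmxA (psi k)) -hpsi !mulmxA.
  case: (orN (PX k)) => Xk; last by apply: mxeqd; left; rewrite /= (negbTE Xk).
  rewrite [mapv (IR K PX) k]/= [mapv (injI K n c j) k]/= [in RHS]constM1; last by rewrite /= PE; move: Xk; rewrite /PX; lia.
  case: (orN (PX k.+1)) => Xk1.
    by rewrite constM1 //= Xk1.
  rewrite constM0; last by rewrite /= (negbTE Xk1).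
  have ek : k = i' by move: Xk Xk1; rewrite /PX; lia.
  subst k; rewrite !mul0mx -!mulmxA; apply/esym.
  apply: (const_transfer (p' := dimv (projP K n c i'.+1) i'.+1)).
  - by rewrite /= Xk.
  - by rewrite /= PP; lia.
  - rewrite mulmxA upsi; apply/sub_kermxP.
    by case/andP: (Hex0 i'.+1).
have u'hom : @is_hom K (IR K PX) (IR K PY) (fun k => const_mx 1).
  by apply: hom_const => k; rewrite /PX /PY; lia.
have u'rf : forall k, row_free (const_mx 1 : 'M[K]_(dimv (IR K PX) k, dimv (IR K PY) k)).
  by apply: row_free_IR => k; rewrite /PX /PY; lia.
have [th [hth uth]] := injI1 _ _ _ g' modX modY u'hom hg' u'rf.
have fullq : row_full (d 0%N q).
  rewrite /row_full (eqmx_rank (Hex 0%N q)); apply: kermx_full; exact: HZ.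
pose T := th q *m pinvmx (d 0%N q).
have TD : T *m d 0%N q = th q by rewrite /T mulmxKpV // submx_full.
have Tmap : T *m mapv (I 0%N) q =
   (const_mx 1 : 'M[K]_(dimv (IR K PY) q, dimv (injI K n c j) q.+1)) *m psi q.+1.
  apply/eqP; rewrite -subr_eq0; apply/eqP.
  set D := (T *m mapv (I 0%N) q - _).
  have DD : D *m d 0%N q.+1 = 0.
    rewrite /D mulmxBl -(mulmxA T) (Hd 0%N q) mulmxA TD -(hth q).
    change (mapv (IR K PY) q) with (const_mx 1 : 'M[K]_(dimv (IR K PY) q, dimv (IR K PY) q.+1)).
    rewrite -(@constM1 K (dimv (IR K PY) q) (dimv (IR K PX) q.+1) (dimv (IR K PY) q.+1)); last by rewrite /= /PX; lia.
    rewrite -mulmxA uth /g' !mulmxA constM1; last by rewrite /= /PX; lia.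
    by rewrite subrr.
  have DK : (D <= kermx (d 0%N q.+1))%MS by apply/sub_kermxP.
  apply: (sub_flat0 (B := e q.+1)).
    by rewrite /= PP; lia.
  by apply: submx_trans DK _; case/andP: (Hex0 q.+1).
have hq : (q + c q <= j)%N.
  have := Ha q ltac:(lia); rewrite ltnn => h; lia.
have z0 : pathmap (I 0%N) q (j - q) = 0 by apply: (path_vanish mI0); lia.
set t := (j - q.+1)%N.
have etq : (j - q)%N = t.+1 by rewrite /t; lia.
rewrite etq in z0.
pose w m := pinvmx (e m) *m (const_mx 1 : 'M[K]_(dimv (projP K n c i'.+1) m, 1)).
have ew m : e m *m w m = const_mx 1 by rewrite /w mulmxA mulmxVp // mul1mx.
clearbody w.
have PS := pathmapS_F t q w.
rewrite z0 mul0mx in PS.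
have := congr1 (mulmx T) PS; rewrite mulmx0 !mulmxA Tmap -(mulmxA _ (psi q.+1)) -(path_hom hpsi).
rewrite mulmxA (@path_IR K (fun k => ((k <= j) && (j < k + c k) && (k < n))%N)); last first.
  by move=> k hk; rewrite PE; lia.
rewrite constM1; last by rewrite /= PE; lia.
rewrite -mulmxA => h0.
have h1 := const_transfer (p := dimv (projP K n c i'.+1) (t + q.+1)) _ _ h0.
rewrite mulmxA upsi ew in h1.
have : (const_mx 1 : 'M[K]_(dimv (projP K n c i'.+1) (t + q.+1), 1)) != 0.
  rewrite /= (_ : (_ && _) = true); last by rewrite PP; lia.
  by apply/eqP => /matrixP /(_ ord0 ord0); rewrite !mxE => /eqP; rewrite oner_eq0.
rewrite h1 ?eqxx //.
- by rewrite /= PP; lia.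
- by rewrite /= /PY; lia.
Qed.

Local Close Scope ring_scope.
Unset Implicit Arguments.

Theorem mainTheorem6 (K : fieldType) (n : nat) (c : nat -> nat) :
  kupisch n c ->
  forall i : nat, (i < n)%N ->
  (inj_dim_eq n c (projP K n c i) 1 <->
   ((c i < dimD K n c (i + c i - 1))%N /\
    (dimD K n c (i + c i - 1) - c i)%N = dimD_pred K n c i)).
Proof. exact: mainTheorem6_aux. Qed.
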